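(* Let $S$ be a set and let $f:2^S\to 2^S$ be monotonic with respect to $\subseteq$. Then: (1) $(\nu f,\ \nu f\times\nu f)$ is a support ordering for $f$; (2) there is a well-ordering ${\prec}\subseteq \mu f\times\mu f$ such that $(\mu f,\prec)$ is a support ordering for $f$.
   Context: The Axiom of Choice is assumed. $\mu f$ and $\nu f$ are the least and greatest fixpoints of $f$ in $(2^S,\subseteq)$. For a binary relation ${\prec}$ on $X$ and $x\in X$, $\prec^{-1}(x)=\{x'\in X\mid x'\prec x\}$. A pair $(X,\prec)$ is a support ordering for $f$ if $X\subseteq S$, ${\prec}\subseteq X\times X$, and $x\in f(\prec^{-1}(x))$ for every $x\in X$. A relation $R$ on $X$ is well-founded if every nonempty $Y\subseteq X$ has an element $y$ such that no $y'\in Y$, $y'\neq y$, satisfies $y' R y$; $R$ is a (strict) total order if it is irreflexive, transitive and any two distinct elements are comparable; a well-ordering is a well-founded total order. *)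

(* Defs.v *)
Definition subset {S : Type} (A B : S -> Prop) : Prop := forall x, A x -> B x.

Definition set_eq {S : Type} (A B : S -> Prop) : Prop := forall x, A x <-> B x.

Definition monotone {S : Type} (f : (S -> Prop) -> (S -> Prop)) : Prop :=
  forall A B, subset A B -> subset (f A) (f B).

Definition is_fixpoint {S : Type} (f : (S -> Prop) -> (S -> Prop)) (M : S -> Prop) : Prop :=
  set_eq (f M) M.

Definition is_least_fixpoint {S : Type} (f : (S -> Prop) -> (S -> Prop)) (M : S -> Prop) : Prop :=
  is_fixpoint f M /\ forall X, is_fixpoint f X -> subset M X.

Definition is_greatest_fixpoint {S : Type} (f : (S -> Prop) -> (S -> Prop)) (N : S -> Prop) : Prop :=
  is_fixpoint f N /\ forall X, is_fixpoint f X -> subset X N.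

Definition pred_of {S : Type} (prec : S -> S -> Prop) (x : S) : S -> Prop :=
  fun x' => prec x' x.

(* (X, prec) is a support ordering for f: prec ⊆ X × X and
   x ∈ f(prec^{-1}(x)) for every x ∈ X.  (X ⊆ S is automatic.) *)
Definition support_ordering {S : Type} (f : (S -> Prop) -> (S -> Prop))
    (X : S -> Prop) (prec : S -> S -> Prop) : Prop :=
  (forall a b, prec a b -> X a /\ X b) /\
  (forall x, X x -> f (pred_of prec x) x).

Definition well_founded_on {S : Type} (X : S -> Prop) (R : S -> S -> Prop) : Prop :=
  forall Y : S -> Prop, subset Y X -> (exists y, Y y) ->
    exists y, Y y /\ forall y', Y y' -> y' <> y -> ~ R y' y.

Definition strict_total_order_on {S : Type} (X : S -> Prop) (R : S -> S -> Prop) : Prop :=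
  (forall x, X x -> ~ R x x) /\
  (forall x y z, X x -> X y -> X z -> R x y -> R y z -> R x z) /\
  (forall x y, X x -> X y -> x <> y -> R x y \/ R y x).

Definition well_ordering_on {S : Type} (X : S -> Prop) (R : S -> S -> Prop) : Prop :=
  well_founded_on X R /\ strict_total_order_on X R.

(* Main.v *)
Require Import Defs.
From Stdlib Require Import Classical ClassicalEpsilon FunctionalExtensionality PropExtensionality.

Lemma set_ext {S : Type} (A B : S -> Prop) : subset A B -> subset B A -> A = B.
Proof.
  intros H1 H2. apply functional_extensionality. intro x.
  apply propositional_extensionality. split; auto.
Qed.

Definition succ {S : Type} (f : (S -> Prop) -> (S -> Prop)) (A : S -> Prop) : S -> Prop :=
  match excluded_middle_informative (exists y, f A y /\ ~ A y) with
  | left H => fun x => A x \/ x = proj1_sig (constructive_indefinite_description _ H)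
  | right _ => A
  end.

Lemma succ_spec {S : Type} (f : (S -> Prop) -> (S -> Prop)) (A : S -> Prop) :
  (subset (f A) A /\ succ f A = A) \/
  (exists y, f A y /\ ~ A y /\ forall x, succ f A x <-> A x \/ x = y).
Proof.
  unfold succ. destruct (excluded_middle_informative _) as [H|H].
  - right. destruct (constructive_indefinite_description _ H) as [y [Hy1 Hy2]]; simpl.
    exists y. split; [|split]; auto. intro; tauto.
  - left. split; auto. intros x Hx. apply NNPP. intro Hn. apply H. eauto.
Qed.

Lemma succ_incl {S : Type} (f : (S -> Prop) -> (S -> Prop)) (A : S -> Prop) :
  subset A (succ f A).
Proof.
  intros x Hx. destruct (succ_spec f A) as [[_ E]|[y [_ [_ E]]]].
  - rewrite E; auto.
  - apply E; auto.
Qed.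

Inductive tower {S : Type} (f : (S -> Prop) -> (S -> Prop)) : (S -> Prop) -> Prop :=
| Tsucc A : tower f A -> tower f (succ f A)
| Tunion (F : (S -> Prop) -> Prop) :
    (forall B, F B -> tower f B) -> tower f (fun x => exists B, F B /\ B x).

Definition strict {S : Type} (B C : S -> Prop) := subset B C /\ ~ subset C B.

Definition extreme {S : Type} (f : (S -> Prop) -> (S -> Prop)) (C : S -> Prop) :=
  forall B, tower f B -> strict B C -> subset (succ f B) C.

Lemma lemma1 {S : Type} (f : (S -> Prop) -> (S -> Prop)) (C : S -> Prop) :
  extreme f C -> forall B, tower f B -> subset B C \/ subset (succ f C) B.
Proof.
  intros HC B HB. induction HB as [B HB IH|F HF IH].
  - destruct IH as [H|H].
    + destruct (classic (subset C B)) as [H'|H'].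
      * right. rewrite (set_ext B C H H'). intros x Hx; auto.
      * left. apply HC; auto. split; auto.
    + right. intros x Hx. apply succ_incl. auto.
  - destruct (classic (forall B, F B -> subset B C)) as [H|H].
    + left. intros x [B [HB Hx]]. eapply H; eauto.
    + right. apply not_all_ex_not in H. destruct H as [B HB].
      apply imply_to_and in HB. destruct HB as [HB1 HB2].
      destruct (IH B HB1) as [H|H]; [tauto|].
      intros x Hx. exists B. split; auto.
Qed.

Lemma lemma2 {S : Type} (f : (S -> Prop) -> (S -> Prop)) (C : S -> Prop) :
  tower f C -> extreme f C.
Proof.
  intro HC. induction HC as [C HC IH|F HF IH].
  - intros B HB [Hs1 Hs2].
    destruct (lemma1 f C IH B HB) as [H|H]; [|tauto].
    destruct (classic (subset C B)) as [H'|H'].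
    + rewrite (set_ext B C H H'). intros x Hx; auto.
    + intros x Hx. apply succ_incl. apply (IH B HB (conj H H')). auto.
  - intros B HB [Hs1 Hs2].
    destruct (classic (exists C, F C /\ strict B C)) as [[C [HFC HBC]]|H].
    + intros x Hx. exists C. split; auto. apply (IH C HFC B HB HBC). auto.
    + exfalso. apply Hs2. intros x [C [HFC Hx]].
      destruct (lemma1 f C (IH C HFC) B HB) as [H1|H1].
      * destruct (classic (subset C B)) as [H2|H2]; auto.
        exfalso. apply H. exists C. split; auto. split; auto.
      * apply H1. apply succ_incl. auto.
Qed.

Lemma comp {S : Type} (f : (S -> Prop) -> (S -> Prop)) (A B : S -> Prop) :
  tower f A -> tower f B -> subset B A \/ subset (succ f A) B.
Proof. intros HA HB. apply lemma1; auto. apply lemma2; auto. Qed.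

Lemma below_prefix {S : Type} (f : (S -> Prop) -> (S -> Prop)) (mu : S -> Prop) :
  monotone f -> is_least_fixpoint f mu ->
  forall X, subset (f X) X -> subset mu X.
Proof.
  intros Hm [_ Hl] X HX.
  pose (P := fun x => forall Y, subset (f Y) Y -> Y x).
  assert (H1 : subset (f P) P).
  { intros x Hx Y HY. apply HY. revert x Hx. apply Hm. intros z Hz. apply Hz; auto. }
  assert (H2 : subset P (f P)).
  { intros x Hx. apply Hx. apply Hm. auto. }
  assert (HP : subset mu P). { apply Hl. intro x; split; auto. }
  intros x Hx. apply HP; auto.
Qed.

Theorem corollary3 (S : Type) (f : (S -> Prop) -> (S -> Prop))
    (mu nu : S -> Prop) :
  monotone f ->
  is_least_fixpoint f mu ->
  is_greatest_fixpoint f nu ->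
  support_ordering f nu (fun a b => nu a /\ nu b) /\
  exists prec : S -> S -> Prop,
    well_ordering_on mu prec /\ support_ordering f mu prec.
Proof.
  intros Hm Hmu Hnu. split.
  { split.
    - intros a b H; exact H.
    - intros x Hx. unfold pred_of.
      assert (H : f nu x) by (apply (proj1 Hnu); auto).
      revert H. apply Hm. intros a Ha; auto. }
  pose proof (below_prefix f mu Hm Hmu) as Hbp.
  destruct Hmu as [Hfix Hleast].
  assert (Tmu : forall B, tower f B -> subset B mu).
  { intros B HB. induction HB as [B HB IH|F HF IH].
    - destruct (succ_spec f B) as [[_ E]|[y [Hy1 [_ E]]]].
      + rewrite E; auto.
      + intros x Hx. apply E in Hx. destruct Hx as [Hx|Hx]; auto.
        subst x. apply Hfix. revert Hy1. apply Hm. auto.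
    - intros x [C [HC Hx]]. eapply IH; eauto. }
  assert (Esc : forall A, tower f A -> (exists y, mu y /\ ~ A y) ->
     exists y, f A y /\ ~ A y /\ forall x, succ f A x <-> A x \/ x = y).
  { intros A HA [y0 [Hy0 Hy0']].
    destruct (succ_spec f A) as [[H _]|H]; auto.
    exfalso. apply Hy0'. apply (Hbp A H). auto. }
  pose (Ay := fun y x => exists B, tower f B /\ B x /\ ~ B y).
  assert (TAy : forall y, tower f (Ay y)).
  { intro y. assert (E : Ay y = (fun x => exists B, (tower f B /\ ~ B y) /\ B x)).
    { apply set_ext; intros x [B HB]; exists B; tauto. }
    rewrite E. apply (Tunion f (fun B => tower f B /\ ~ B y)). intros B [HB _]; auto. }
  assert (nAy : forall y, ~ Ay y y).
  { intros y [B [_ [H1 H2]]]. auto. }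
  assert (Ysucc : forall y, mu y -> f (Ay y) y /\ forall x, succ f (Ay y) x <-> Ay y x \/ x = y).
  { intros y Hy. destruct (Esc (Ay y) (TAy y)) as [y' [H1 [H2 H3]]].
    { exists y; split; auto. }
    assert (Hs : succ f (Ay y) y).
    { apply NNPP. intro Hn. apply H2.
      exists (succ f (Ay y)). split; [apply Tsucc; auto|]. split; auto. apply H3; auto. }
    apply H3 in Hs. destruct Hs as [Hs|Hs]; [exfalso; apply (nAy y); auto|].
    subst y'. split; auto. }
  exists (fun x y => mu x /\ mu y /\ exists B, tower f B /\ B x /\ ~ B y).
  split; [split|].
  -
    intros Y HY [y0 Hy0].
    pose (A := fun x => exists B, tower f B /\ B x /\ (forall z, Y z -> ~ B z)).
    assert (TA : tower f A).
    { assert (E : A = (fun x => exists B, (tower f B /\ (forall z, Y z -> ~ B z)) /\ B x)).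
      { apply set_ext; intros x [B HB]; exists B; tauto. }
      rewrite E. apply (Tunion f (fun B => tower f B /\ (forall z, Y z -> ~ B z))). intros B [HB _]; auto. }
    assert (AY : forall z, Y z -> ~ A z).
    { intros z Hz [B [_ [HB1 HB2]]]. apply (HB2 z Hz HB1). }
    destruct (Esc A TA) as [y [H1 [H2 H3]]].
    { exists y0. split; auto. }
    assert (HyY : Y y).
    { apply NNPP. intro Hn. apply H2.
      exists (succ f A). split; [apply Tsucc; auto|]. split; [apply H3; auto|].
      intros z Hz Hz'. apply H3 in Hz'. destruct Hz' as [Hz'|Hz'].
      - apply (AY z Hz Hz').
      - subst z. auto. }
    exists y. split; auto. intros y' Hy' Hne [_ [_ [B [HB [HB1 HB2]]]]].
    destruct (comp f A B TA HB) as [H|H].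
    + apply (AY y' Hy'). apply H; auto.
    + apply HB2. apply H. apply H3. auto.
  - split; [|split].
    + intros x _ [_ [_ [B [_ [H1 H2]]]]]. auto.
    + intros x y z _ _ _ [Hx [Hy [B [HB [HB1 HB2]]]]] [_ [Hz [C [HC [HC1 HC2]]]]].
      split; [auto|split; [auto|]].
      destruct (comp f B C HB HC) as [H|H].
      * exfalso. apply HB2. apply H. auto.
      * exists C. split; auto. split; auto. apply H. apply succ_incl. auto.
    + intros x y Hx Hy Hne.
      destruct (comp f (Ay x) (Ay y) (TAy x) (TAy y)) as [H|H].
      * destruct (comp f (Ay y) (Ay x) (TAy y) (TAy x)) as [H'|H'].
        -- exfalso. assert (E : Ay x = Ay y) by (apply set_ext; auto).
           destruct (Ysucc x Hx) as [_ Sx]. destruct (Ysucc y Hy) as [_ Sy].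
           assert (Hs : succ f (Ay x) x) by (apply Sx; auto).
           rewrite E in Hs. apply Sy in Hs. destruct Hs as [Hs|Hs]; auto.
           apply (nAy x). apply H. auto.
        -- right. split; auto. split; auto.
           apply H'. apply (Ysucc y Hy). auto.
      * left. split; auto. split; auto.
        apply H. apply (Ysucc x Hx). auto.
  - split.
    + intros a b [Ha [Hb _]]; auto.
    + intros y Hy. destruct (Ysucc y Hy) as [H _]. revert H. apply Hm.
      intros x Hx. unfold pred_of. split; [apply (Tmu (Ay y) (TAy y)); auto|].
      split; auto.
Qed.
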